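(* In the setting of the previous definitions, let $u^+(t,x,z)=\lim_{n\to\infty}u^n(t,x,z)$, $u^-(t,x,z)=\lim_{n\to\infty}u_n(t,x,z)$ and $\Psi_0^\pm(x,z)=u^\pm(0,x,z)$. Then for each $z\in\mathbb R$, $u^\pm(t,x,z)=u(t,x;\Psi_0^\pm(\cdot,z),z)$ for all $t,x\in\mathbb R$; in particular $u^\pm(\cdot,\cdot,z)$ are entire solutions of the space-continuous equation.
   Context: Periodic lattice setting: $d(t,j)$ bounded with $\inf d>0$, $f(t,j,u)$ satisfying (H0) (locally Hölder in $t$, Lipschitz in $u$, $C^1$ in $u$ for $u\ge0$, $f(t,j,u)=f(t,j,0)$ for $u\le0$, $f<0$ for $u\ge M_0$, $f_u<0$ for $u\ge0$, $\liminf_{t-s\to\infty}\frac1{t-s}\int_s^t\inf_jf(\tau,j,0)d\tau>0$), with $d(t+T,j)=d(t,j+J)=d(t,j)$, $f(t+T,j,u)=f(t,j+J,u)=f(t,j,u)$. $u^+_j(t)$ is the unique strictly positive entire solution of the lattice equation. $\lambda(\mu),\psi^\mu(t,j)>0$ ($T$-periodic in $t$, $J$-periodic in $j$, normalized) are such that $e^{\lambda(\mu)t}\psi^\mu$ solves $\dot v_j=d(t,j-1)(e^\mu v_{j-1}-v_j)+d(t,j+1)(e^{-\mu}v_{j+1}-v_j)+f(t,j,0)v_j$; $c^*=\min_{\mu>0}\lambda(\mu)/\mu$ attained at $\mu^*$; fix $c>c^*$, $0<\mu<\mu'<\min\{2\mu,\mu^*\}$ with $c=\lambda(\mu)/\mu>\lambda(\mu')/\mu'>c^*$.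 Extend to $x\in\mathbb R$ piecewise constantly on $[j,j+1)$. Space-continuous equation: $\partial_tu(t,x)=d(t,x+z+1)(u(t,x+1)-u(t,x))+d(t,x+z-1)(u(t,x-1)-u(t,x))+u(t,x)f(t,x+z,u(t,x))$, solution $u(t,x;u_0,z)$ with $u(0,\cdot;u_0,z)=u_0$. With $0<d\le2$, $d_1/d$ large, $b>0$ small: $\underline v(t,x;z)=de^{-\mu(x-ct)}\psi^\mu(t,x+z)-d_1e^{-\mu'(x-ct)}\psi^{\mu'}(t,x+z)$, $\bar v$ the same with $+d_1$; $\underline u(t,x;z)=\max\{b\psi^0(t,x+z),\underline v(t,x;z)\}$ for $x\le M+ct$ and $\underline v$ otherwise (with $M$ such that $b\psi^0\le\underline v$ for $x-ct\in[N,M]$); $\bar u(t,x;z)=\min\{\bar v(t,x;z),u^+_{x+z}(t)\}$. $u^n(t,x,z)=u(t+nT,x+cnT;\bar u(0,\cdot;z-cnT),z-cnT)$ and $u_n(t,x,z)=u(t+nT,x+cnT;\underline u(0,\cdot;z-cnT),z-cnT)$ (defined for $t+nT\ge0$); these are eventually monotone in $n$ (non-increasing and non-decreasing, respectively), so the limits exist. *)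

(* Defs.v *)
From Stdlib Require Import Reals Lra Lia ZArith.
Open Scope R_scope.

(* floor x, as an integer: up x is the unique integer with x < up x <= x+1 *)
Definition flr (x : R) : Z := (up x - 1)%Z.

(* piecewise-constant extension to x in R of a lattice function: value on [j,j+1) is g t j *)
Definition ext (g : R -> Z -> R) (t x : R) : R := g t (flr x).

Definition lat_rhs (d : R -> Z -> R) (f : R -> Z -> R -> R) (t : R) (u : Z -> R) (j : Z) : R :=
  d t (j - 1)%Z * (u (j - 1)%Z - u j) + d t (j + 1)%Z * (u (j + 1)%Z - u j)
  + u j * f t j (u j).

(* right-hand side of the linearized (shifted by e^{mu}) lattice equation *)
Definition lin_rhs (d : R -> Z -> R) (f : R -> Z -> R -> R) (mu t : R) (v : Z -> R) (j : Z) : R :=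
  d t (j - 1)%Z * (exp mu * v (j - 1)%Z - v j)
  + d t (j + 1)%Z * (exp (- mu) * v (j + 1)%Z - v j)
  + f t j 0 * v j.

Definition sc_rhs (d : R -> Z -> R) (f : R -> Z -> R -> R) (z t : R) (w : R -> R) (x : R) : R :=
  ext d t (x + z + 1) * (w (x + 1) - w x) + ext d t (x + z - 1) * (w (x - 1) - w x)
  + w x * f t (flr (x + z)) (w x).

Definition hyp_d (T : R) (J : Z) (d : R -> Z -> R) : Prop :=
  (exists B, forall t j, d t j <= B) /\
  (exists delta, 0 < delta /\ forall t j, delta <= d t j) /\
  (forall j, continuity (fun t => d t j)) /\
  (forall t j, d (t + T) j = d t j) /\
  (forall t j, d t (j + J)%Z = d t j).

Definition hyp_H0 (T : R) (J : Z) (M0 : R) (f : R -> Z -> R -> R) (fu : R -> Z -> R -> R) : Prop :=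
  (exists alpha, 0 < alpha <= 1 /\ forall R0, exists C, forall t s j u,
       Rabs u <= R0 -> Rabs (t - s) <= 1 ->
       Rabs (f t j u - f s j u) <= C * Rpower (Rabs (t - s)) alpha) /\
  (exists L, forall t j u v, Rabs (f t j u - f t j v) <= L * Rabs (u - v)) /\
  (forall t j u, 0 < u -> derivable_pt_lim (fun v => f t j v) u (fu t j u)) /\
  (forall t j u, 0 <= u -> forall eps, 0 < eps -> exists delta, 0 < delta /\
       forall v, 0 <= v -> Rabs (v - u) < delta -> Rabs (fu t j v - fu t j u) < eps) /\
  (forall t j u, u <= 0 -> f t j u = f t j 0) /\
  (0 < M0 /\ forall t j u, M0 <= u -> f t j u < 0) /\
  (forall t j u, 0 <= u -> fu t j u < 0) /\
  (* liminf_{t-s -> oo} (1/(t-s)) int_s^t inf_j f(tau,j,0) dtau > 0 *)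
  (exists g : R -> R,
     (forall tau j, g tau <= f tau j 0) /\
     (forall tau eps, 0 < eps -> exists j, f tau j 0 < g tau + eps) /\
     exists eps Lt, 0 < eps /\ forall s t, Lt <= t - s ->
       exists pr : Riemann_integrable g s t, eps <= RiemannInt pr / (t - s)) /\
  (forall t j u, f (t + T) j u = f t j u) /\
  (forall t j u, f t (j + J)%Z u = f t j u).

(* u^+ is the unique strictly positive (bounded, with positive infimum) entire solution *)
Definition is_uplus (d : R -> Z -> R) (f : R -> Z -> R -> R) (up_ : R -> Z -> R) : Prop :=
  (forall t j, derivable_pt_lim (fun s => up_ s j) t (lat_rhs d f t (up_ t) j)) /\
  (exists a B, 0 < a /\ forall t j, a <= up_ t j <= B).

(* lam mu, psi mu: principal eigenpair; e^{lam t} psi solves the linear equation *)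
Definition is_eigen (T : R) (J : Z) (d : R -> Z -> R) (f : R -> Z -> R -> R)
    (lam : R -> R) (psi : R -> R -> Z -> R) : Prop :=
  forall mu,
    (forall t j, 0 < psi mu t j) /\
    (forall t j, psi mu (t + T) j = psi mu t j) /\
    (forall t j, psi mu t (j + J)%Z = psi mu t j) /\
    (forall t j, derivable_pt_lim (fun s => exp (lam mu * s) * psi mu s j) t
                   (lin_rhs d f mu t (fun k => exp (lam mu * t) * psi mu t k) j)).

(* U t x u0 z = u(t,x;u0,z): solution of the space-continuous equation for t >= 0,
   for bounded initial data u0 (locally bounded in time, continuous at t = 0) *)
Definition is_sol_map (d : R -> Z -> R) (f : R -> Z -> R -> R)
    (U : R -> R -> (R -> R) -> R -> R) : Prop :=
  forall (u0 : R -> R) (z : R), (exists B, forall x, Rabs (u0 x) <= B) ->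
    (forall x, U 0 x u0 z = u0 x) /\
    (forall t x, 0 < t ->
       derivable_pt_lim (fun s => U s x u0 z) t (sc_rhs d f z t (fun y => U t y u0 z) x)) /\
    (forall x eps, 0 < eps -> exists delta, 0 < delta /\
       forall s, 0 <= s < delta -> Rabs (U s x u0 z - U 0 x u0 z) < eps) /\
    (forall tau, exists B, forall t x, 0 <= t <= tau -> Rabs (U t x u0 z) <= B).

(* sub/super-solution building blocks *)
Definition vlow (psi : R -> R -> Z -> R) (c mu mu' dd d1 t x z : R) : R :=
  dd * exp (- mu * (x - c * t)) * ext (psi mu) t (x + z)
  - d1 * exp (- mu' * (x - c * t)) * ext (psi mu') t (x + z).

Definition vup (psi : R -> R -> Z -> R) (c mu mu' dd d1 t x z : R) : R :=
  dd * exp (- mu * (x - c * t)) * ext (psi mu) t (x + z)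
  + d1 * exp (- mu' * (x - c * t)) * ext (psi mu') t (x + z).

Definition ulow (psi : R -> R -> Z -> R) (c mu mu' dd d1 b M t x z : R) : R :=
  if Rle_dec x (M + c * t)
  then Rmax (b * ext (psi 0) t (x + z)) (vlow psi c mu mu' dd d1 t x z)
  else vlow psi c mu mu' dd d1 t x z.

Definition uupper (psi : R -> R -> Z -> R) (up_ : R -> Z -> R) (c mu mu' dd d1 t x z : R) : R :=
  Rmin (vup psi c mu mu' dd d1 t x z) (ext up_ t (x + z)).

Definition u_sup (U : R -> R -> (R -> R) -> R -> R) (psi : R -> R -> Z -> R) (up_ : R -> Z -> R)
    (T c mu mu' dd d1 : R) (n : nat) (t x z : R) : R :=
  U (t + INR n * T) (x + c * INR n * T)
    (fun y => uupper psi up_ c mu mu' dd d1 0 y (z - c * INR n * T)) (z - c * INR n * T).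

Definition u_sub (U : R -> R -> (R -> R) -> R -> R) (psi : R -> R -> Z -> R)
    (T c mu mu' dd d1 b M : R) (n : nat) (t x z : R) : R :=
  U (t + INR n * T) (x + c * INR n * T)
    (fun y => ulow psi c mu mu' dd d1 b M 0 y (z - c * INR n * T)) (z - c * INR n * T).

(* Main.v *)
Require Import Defs.
From Stdlib Require Import Reals Lra Lia ZArith.
Open Scope R_scope.


Lemma abs_le_inv (a b : R) : Rabs a <= b -> - b <= a <= b.
Proof. unfold Rabs; destruct (Rcase_abs a); intros; lra. Qed.
Lemma abs_lt_inv (a b : R) : Rabs a < b -> - b < a < b.
Proof. unfold Rabs; destruct (Rcase_abs a); intros; lra. Qed.

Definition rcont (g : R -> R) (a : R) : Prop :=
  forall eps, 0 < eps -> exists del, 0 < del /\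
    forall s, a <= s < a + del -> Rabs (g s - g a) < eps.

Lemma deriv_cont (g : R -> R) (a l : R) : derivable_pt_lim g a l ->
  forall eps, 0 < eps -> exists del, 0 < del /\
    forall s, Rabs (s - a) < del -> Rabs (g s - g a) < eps.
Proof.
  intros H eps Heps.
  assert (Hc : continuity_pt g a).
  { apply derivable_continuous_pt. exists l. exact H. }
  destruct (Hc eps Heps) as [del [Hdel Hx]].
  exists del; split; [lra|]. intros s Hs.
  destruct (Req_dec s a) as [->|Hne].
  - unfold Rminus; rewrite Rplus_opp_r, Rabs_R0; lra.
  - apply (Hx s). split; [split; [exact I| auto] | exact Hs].
Qed.

Lemma deriv_rcont (g : R -> R) (a l : R) : derivable_pt_lim g a l -> rcont g a.
Proof.
  intros H eps Heps. destruct (deriv_cont g a l H eps Heps) as [del [Hd Hx]].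
  exists del; split; auto. intros s Hs. apply Hx. rewrite Rabs_right; lra.
Qed.

Lemma last_crossing (g g' : R -> R) (a b A : R) : a < b -> 0 <= A ->
  rcont g a ->
  (forall s, a < s <= b -> derivable_pt_lim g s (g' s)) ->
  g a <= 0 ->
  (forall s, a < s <= b -> 0 < g s -> g' s <= A) ->
  g b <= A * (b - a).
Proof.
  intros Hab HA Hrc Hder Ha Hpos.
  destruct (Rle_lt_dec (g b) (A * (b - a))) as [H|H]; [exact H|exfalso].
  set (E := fun s => a <= s <= b /\ g s <= 0).
  assert (HbE : bound E) by (exists b; intros s [Hs _]; lra).
  assert (HnE : exists s, E s) by (exists a; split; [lra|exact Ha]).
  destruct (completeness E HbE HnE) as [c [Hub Hlub]].
  assert (Hac : a <= c) by (apply Hub; split; [lra|exact Ha]).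
  assert (Hcb : c <= b) by (apply Hlub; intros s [Hs _]; lra).
  assert (Hrcc : rcont g c).
  { destruct (Req_dec c a) as [->|Hne]; [exact Hrc|].
    apply (deriv_rcont g c (g' c)). apply Hder; lra. }
  assert (Hgc : g c <= 0).
  { destruct (Req_dec c a) as [->|Hne]; [exact Ha|].
    destruct (Rle_lt_dec (g c) 0) as [Hle|Hgt]; [exact Hle|exfalso].
    destruct (deriv_cont g c (g' c) (Hder c ltac:(lra)) (g c) Hgt) as [del [Hdel Hx]].
    set (c' := c - Rmin del (c - a) / 2).
    assert (Hm1 : 0 < Rmin del (c - a)) by (apply Rmin_glb_lt; lra).
    assert (Hm2 : Rmin del (c - a) <= del) by apply Rmin_l.
    assert (c <= c').
    { apply Hlub. intros s [Hs Hgs].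
      destruct (Rle_lt_dec s c') as [Hl|Hl]; [exact Hl|exfalso].
      assert (s <= c) by (apply Hub; split; auto).
      assert (Rabs (s - c) < del) by (rewrite Rabs_left1; unfold c' in Hl; lra).
      specialize (Hx s H1). apply abs_lt_inv in Hx. lra. }
    unfold c' in H0. lra. }
  assert (Hcb' : c < b) by (destruct (Req_dec c b) as [->|]; [nra|lra]).
  assert (Hafter : forall s, c < s <= b -> 0 < g s).
  { intros s Hs. destruct (Rle_lt_dec (g s) 0) as [Hl|Hl]; [|exact Hl].
    assert (s <= c) by (apply Hub; split; [lra|exact Hl]). lra. }
  set (eta := g b - A * (b - a)).
  assert (Heta : 0 < eta) by (unfold eta; lra).
  destruct (Hrcc eta Heta) as [del [Hdel Hx]].
  set (c' := c + Rmin del (b - c) / 2).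
  assert (Hm1 : 0 < Rmin del (b - c)) by (apply Rmin_glb_lt; lra).
  assert (Hm2 : Rmin del (b - c) <= del) by apply Rmin_l.
  assert (Hm3 : Rmin del (b - c) <= b - c) by apply Rmin_r.
  assert (Hc'1 : c < c') by (unfold c'; lra).
  assert (Hc'2 : c' < b) by (unfold c'; lra).
  assert (Hgc' : Rabs (g c' - g c) < eta) by (apply Hx; unfold c'; lra).
  destruct (MVT_cor2 g g' c' b Hc'2) as [xi [Hxi1 Hxi2]].
  { intros s Hs. apply Hder. lra. }
  assert (g' xi <= A) by (apply Hpos; [lra| apply Hafter; lra]).
  apply abs_lt_inv in Hgc'.
  assert (g' xi * (b - c') <= A * (b - c')) by (apply Rmult_le_compat_r; lra).
  assert (A * (b - c') <= A * (b - a)) by (apply Rmult_le_compat_l; lra).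
  unfold eta in *. lra.
Qed.

Lemma mvt_rc (g g' : R -> R) (a b A : R) : a < b -> 0 <= A ->
  rcont g a ->
  (forall s, a < s <= b -> derivable_pt_lim g s (g' s)) ->
  (forall s, a < s <= b -> Rabs (g' s) <= A) ->
  Rabs (g b - g a) <= A * (b - a).
Proof.
  intros Hab HA Hrc Hder Hbd.
  assert (H1 : g b - g a <= A * (b - a)).
  { assert (H := last_crossing (fun s => g s - g a) g' a b A Hab HA).
    simpl in H. replace (g a - g a) with 0 in H by ring.
    apply H; auto with real.
    - intros eps Heps. destruct (Hrc eps Heps) as [del [Hd Hx]]. exists del; split; auto.
      intros s Hs. replace (g s - g a - (g a - g a)) with (g s - g a) by ring. auto.
    - intros s Hs. replace (g' s) with (g' s - 0) by ring.
      change (derivable_pt_lim (minus_fct g (fct_cte (g a))) s (g' s - 0)).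
      apply derivable_pt_lim_minus; auto. apply derivable_pt_lim_const.
    - intros s Hs _. specialize (Hbd s Hs). apply abs_le_inv in Hbd. lra. }
  assert (H2 : g a - g b <= A * (b - a)).
  { assert (H := last_crossing (fun s => g a - g s) (fun s => - g' s) a b A Hab HA).
    simpl in H. replace (g a - g a) with 0 in H by ring.
    apply H; auto with real.
    - intros eps Heps. destruct (Hrc eps Heps) as [del [Hd Hx]]. exists del; split; auto.
      intros s Hs. replace (g a - g s - (g a - g a)) with (- (g s - g a)) by ring. rewrite Rabs_Ropp. auto.
    - intros s Hs. replace (- g' s) with (0 - g' s) by ring.
      change (derivable_pt_lim (minus_fct (fct_cte (g a)) g) s (0 - g' s)).
      apply derivable_pt_lim_minus; auto. apply derivable_pt_lim_const.
    - intros s Hs _. specialize (Hbd s Hs). apply abs_le_inv in Hbd. lra. }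
  apply Rabs_le; lra.
Qed.

Lemma stepping (P : R -> Prop) (h : R) : 0 < h -> P 0 ->
  (forall t0, 0 <= t0 -> P t0 -> forall t, t0 <= t <= t0 + h -> P t) ->
  forall t, 0 <= t -> P t.
Proof.
  intros Hh H0 Hstep.
  assert (Hk : forall k : nat, forall t, 0 <= t <= INR k * h -> P t).
  { induction k as [|k IH]; intros t Ht.
    - simpl in Ht. replace t with 0 by lra. exact H0.
    - rewrite S_INR in Ht.
      destruct (Rle_lt_dec t (INR k * h)) as [Hl|Hl].
      + apply IH; lra.
      + assert (0 <= INR k) by apply pos_INR.
        apply (Hstep (INR k * h)); [nra| apply IH; nra | lra]. }
  intros t Ht. destruct (INR_archimed h t Hh) as [k Hk'].
  apply (Hk k). lra.
Qed.

Lemma per_nat (p : R -> R) (T : R) : (forall t, p (t + T) = p t) ->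
  forall (k : nat) t, p (t + INR k * T) = p t.
Proof.
  intros H k. induction k as [|k IH]; intros t.
  - simpl. f_equal. ring.
  - rewrite S_INR. replace (t + (INR k + 1) * T) with ((t + INR k * T) + T) by ring.
    rewrite H. apply IH.
Qed.

Lemma floor_nat (T : R) : 0 < T -> forall (N : nat) t, 0 <= t < INR N * T ->
  exists k : nat, INR k * T <= t < INR k * T + T.
Proof.
  intros HT N. induction N as [|N IH]; intros t Ht.
  - simpl in Ht. lra.
  - rewrite S_INR in Ht. destruct (Rlt_le_dec t (INR N * T)) as [Hl|Hl].
    + apply IH. lra.
    + exists N. lra.
Qed.

Lemma per_reduce (p : R -> R) (T : R) : 0 < T -> (forall t, p (t + T) = p t) ->
  forall t, exists t', 0 <= t' <= T /\ p t = p t'.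
Proof.
  intros HT H t.
  destruct (INR_archimed T (Rabs t) HT) as [k1 Hk1].
  set (s := t + INR k1 * T).
  assert (Hs : 0 <= s) by (unfold s; pose proof (Rle_abs (- t)); rewrite Rabs_Ropp in H0; lra).
  destruct (INR_archimed T s HT) as [k2 Hk2].
  destruct (floor_nat T HT k2 s ltac:(lra)) as [k [Hk Hk']].
  exists (s - INR k * T). split; [lra|].
  rewrite <- (per_nat p T H k1 t). fold s.
  rewrite <- (per_nat p T H k (s - INR k * T)). f_equal. ring.
Qed.

Lemma perZ (g : Z -> R) (J : Z) : (0 < J)%Z -> (forall j, g (j + J)%Z = g j) ->
  forall j, g j = g (j mod J)%Z.
Proof.
  intros HJ H j.
  assert (Hn : forall (q : nat) r, g (r + Z.of_nat q * J)%Z = g r).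
  { induction q as [|q IH]; intros r.
    - f_equal. lia.
    - replace (r + Z.of_nat (S q) * J)%Z with ((r + Z.of_nat q * J) + J)%Z by lia.
      rewrite H. apply IH. }
  assert (Hq : forall q r, g (r + q * J)%Z = g r).
  { intros q r. destruct (Z_le_gt_dec 0 q) as [Hq|Hq].
    - replace q with (Z.of_nat (Z.to_nat q)) by lia. apply Hn.
    - rewrite <- (Hn (Z.to_nat (- q)) (r + q * J)%Z). f_equal. lia. }
  rewrite (Z_div_mod_eq_full j J) at 1.
  rewrite <- (Hq (j / J)%Z (j mod J)%Z). f_equal. lia.
Qed.

Fixpoint fsum (g : Z -> R) (n : nat) : R :=
  match n with O => 0 | S n => fsum g n + g (Z.of_nat n) end.

Lemma fsum_nonneg (g : Z -> R) n : (forall i, 0 <= g i) -> 0 <= fsum g n.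
Proof. intros H. induction n; simpl; [lra|]. specialize (H (Z.of_nat n)); lra. Qed.

Lemma fsum_ge (g : Z -> R) : (forall i, 0 <= g i) ->
  forall n (r : nat), (r < n)%nat -> g (Z.of_nat r) <= fsum g n.
Proof.
  intros H n. induction n as [|n IH]; intros r Hr; [lia|].
  simpl. destruct (Nat.eq_dec r n) as [->|Hne].
  - pose proof (fsum_nonneg g n H). lra.
  - specialize (IH r ltac:(lia)). specialize (H (Z.of_nat n)). lra.
Qed.

Lemma per_bound (g : Z -> R) (J : Z) : (0 < J)%Z -> (forall j, g (j + J)%Z = g j) ->
  exists G, forall j, Rabs (g j) <= G.
Proof.
  intros HJ H. exists (fsum (fun i => Rabs (g i)) (Z.to_nat J)).
  intros j. rewrite (perZ g J HJ H j).
  assert (Hm := Z.mod_pos_bound j J HJ).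
  replace (j mod J)%Z with (Z.of_nat (Z.to_nat (j mod J))) by lia.
  apply (fsum_ge (fun i => Rabs (g i))); [intros; apply Rabs_pos|lia].
Qed.

Lemma per_lower (g : Z -> R) (J : Z) : (0 < J)%Z -> (forall j, g (j + J)%Z = g j) ->
  (forall j, 0 < g j) -> exists G, 0 < G /\ forall j, G <= g j.
Proof.
  intros HJ H Hp.
  destruct (per_bound (fun j => / g j) J HJ) as [G HG].
  { intros j. rewrite H. auto. }
  assert (HG0 : 0 < G).
  { specialize (HG 0%Z). specialize (Hp 0%Z). rewrite Rabs_right in HG.
    - assert (0 < / g 0%Z) by (apply Rinv_0_lt_compat; auto). lra.
    - apply Rle_ge, Rlt_le, Rinv_0_lt_compat; auto. }
  exists (/ G). split; [apply Rinv_0_lt_compat; auto|].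
  intros j. specialize (HG j). specialize (Hp j).
  rewrite Rabs_right in HG by (apply Rle_ge, Rlt_le, Rinv_0_lt_compat; auto).
  rewrite <- (Rinv_inv (g j)). apply Rinv_le_contravar; auto.
  apply Rinv_0_lt_compat; auto.
Qed.

Lemma rpow_le1 r a : 0 <= r <= 1 -> 0 < a -> Rpower r a <= 1.
Proof.
  intros Hr Ha. unfold Rpower. rewrite <- exp_0.
  assert (ln r <= 0).
  { destruct (Req_dec r 0) as [->|Hn].
    - unfold ln. destruct (Rlt_dec 0 0) as [hh|hh]; [exfalso; exact (Rlt_irrefl 0 hh)|right; reflexivity].
    - rewrite <- ln_1. destruct (Req_dec r 1) as [->|]; [right; reflexivity|]. left; apply ln_increasing; lra. }
  destruct (Req_dec (a * ln r) 0) as [->|]; [lra|].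
  left. apply exp_increasing. nra.
Qed.

Lemma rpow_pos r a : 0 < Rpower r a.
Proof. unfold Rpower. apply exp_pos. Qed.

Lemma holder_chain (p : R -> R) (C a : R) : 0 < a ->
  (forall t s, Rabs (t - s) <= 1 -> Rabs (p t - p s) <= C * Rpower (Rabs (t - s)) a) ->
  forall (n : nat) t, 0 <= t <= INR n -> Rabs (p t - p 0) <= INR n * Rabs C.
Proof.
  intros Ha H.
  assert (Hstep : forall t s, Rabs (t - s) <= 1 -> Rabs (p t - p s) <= Rabs C).
  { intros t s Hts. eapply Rle_trans; [apply H; auto|].
    pose proof (rpow_le1 (Rabs (t - s)) a (conj (Rabs_pos _) Hts) Ha).
    pose proof (rpow_pos (Rabs (t - s)) a).
    apply Rle_trans with (Rabs C * Rpower (Rabs (t - s)) a).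
    - apply Rmult_le_compat_r; [lra|apply Rle_abs].
    - pose proof (Rabs_pos C). nra. }
  induction n as [|n IH]; intros t Ht.
  - simpl in *. replace t with 0 by lra. unfold Rminus. rewrite Rplus_opp_r, Rabs_R0. lra.
  - rewrite S_INR in *. pose proof (Rabs_pos C).
    destruct (Rle_lt_dec t 1) as [Hl|Hl].
    + assert (Rabs (p t - p 0) <= Rabs C) by (apply Hstep; rewrite Rminus_0_r, Rabs_right; lra).
      pose proof (pos_INR n). nra.
    + assert (Rabs (p t - p (t - 1)) <= Rabs C)
        by (apply Hstep; replace (t - (t - 1)) with 1 by ring; rewrite Rabs_R1; lra).
      assert (Rabs (p (t - 1) - p 0) <= INR n * Rabs C) by (apply IH; lra).
      replace (p t - p 0) with ((p t - p (t - 1)) + (p (t - 1) - p 0)) by ring.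
      eapply Rle_trans; [apply Rabs_triang|]. lra.
Qed.

Lemma F0_exists (T : R) (J : Z) (M0 : R) (f fu : R -> Z -> R -> R) :
  0 < T -> (0 < J)%Z -> hyp_H0 T J M0 f fu -> exists F0, forall t j, Rabs (f t j 0) <= F0.
Proof.
  intros HT HJ [[a [Ha Hhol]] [_ [_ [_ [_ [_ [_ [_ [HpT HpJ]]]]]]]]].
  destruct (Hhol 0) as [C HC].
  destruct (INR_unbounded T) as [Tn HTn].
  exists (fsum (fun i => Rabs (f 0 i 0) + INR Tn * Rabs C) (Z.to_nat J)).
  intros t j.
  destruct (per_reduce (fun t => f t j 0) T HT (fun t => HpT t j 0) t) as [t' [Ht' Heq]].
  simpl in Heq. rewrite Heq.
  rewrite (perZ (fun j => f t' j 0) J HJ (fun j => HpJ t' j 0) j).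
  assert (Hm := Z.mod_pos_bound j J HJ).
  set (r := (j mod J)%Z) in *.
  assert (Hc := holder_chain (fun t => f t r 0) C a (proj1 Ha)
     (fun t s Hts => HC t s r 0 ltac:(rewrite Rabs_R0; lra) Hts) Tn t' ltac:(lra)).
  simpl in Hc.
  apply Rle_trans with (Rabs (f 0 r 0) + INR Tn * Rabs C).
  { replace (f t' r 0) with (f 0 r 0 + (f t' r 0 - f 0 r 0)) by ring.
    eapply Rle_trans; [apply Rabs_triang|]. lra. }
  replace r with (Z.of_nat (Z.to_nat r)) by lia.
  apply (fsum_ge (fun i => Rabs (f 0 i 0) + INR Tn * Rabs C)); [|lia].
  intros i. pose proof (Rabs_pos (f 0 i 0)). pose proof (Rabs_pos C). pose proof (pos_INR Tn). nra.
Qed.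

Definition is_sol (d : R -> Z -> R) (f : R -> Z -> R -> R) (z : R) (w : R -> R -> R) : Prop :=
  (forall t x, 0 < t -> derivable_pt_lim (fun s => w s x) t (sc_rhs d f z t (fun y => w t y) x)) /\
  (forall x, rcont (fun s => w s x) 0) /\
  (forall tau, exists B, forall t x, 0 <= t <= tau -> Rabs (w t x) <= B).

Lemma sol_rcont d f z w : is_sol d f z w -> forall t x, 0 <= t -> rcont (fun s => w s x) t.
Proof.
  intros [Hd [Hr _]] t x Ht. destruct (Req_dec t 0) as [->|Hn]; [apply Hr|].
  eapply deriv_rcont. apply Hd. lra.
Qed.

Lemma deriv_sub_const (g : R -> R) (c s l : R) : derivable_pt_lim g s l ->
  derivable_pt_lim (fun s => g s - c) s l.
Proof.
  intros H. replace l with (l - 0) by ring.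
  change (derivable_pt_lim (minus_fct g (fct_cte c)) s (l - 0)).
  apply derivable_pt_lim_minus; auto. apply derivable_pt_lim_const.
Qed.

Lemma deriv_opp (g : R -> R) (s l : R) : derivable_pt_lim g s l ->
  derivable_pt_lim (fun s => - g s) s (- l).
Proof.
  intros H. change (derivable_pt_lim (opp_fct g) s (- l)).
  apply derivable_pt_lim_opp; auto.
Qed.

Lemma deriv_diff (g1 g2 : R -> R) (s l1 l2 : R) : derivable_pt_lim g1 s l1 ->
  derivable_pt_lim g2 s l2 -> derivable_pt_lim (fun s => g1 s - g2 s) s (l1 - l2).
Proof.
  intros H1 H2. change (derivable_pt_lim (minus_fct g1 g2) s (l1 - l2)).
  apply derivable_pt_lim_minus; auto.
Qed.

Section Sol.
Variables (d : R -> Z -> R) (f : R -> Z -> R -> R) (Bd F0 L M0 : R).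
Hypothesis Hdpos : forall t j, 0 <= d t j.
Hypothesis HdB : forall t j, d t j <= Bd.
Hypothesis HF0 : forall t j, Rabs (f t j 0) <= F0.
Hypothesis HL : forall t j u v, Rabs (f t j u - f t j v) <= L * Rabs (u - v).
Hypothesis Hneg : forall t j u, u <= 0 -> f t j u = f t j 0.
Hypothesis HM0 : forall t j u, M0 <= u -> f t j u < 0.
Hypothesis HM0p : 0 < M0.

Lemma Bd_nonneg : 0 <= Bd.
Proof. specialize (Hdpos 0 0%Z); specialize (HdB 0 0%Z); lra. Qed.
Lemma F0_nonneg : 0 <= F0.
Proof. specialize (HF0 0 0%Z). pose proof (Rabs_pos (f 0 0%Z 0)). lra. Qed.

Lemma dterm_le (D a E : R) : 0 <= D <= Bd -> 0 <= E -> a <= E -> D * a <= Bd * E.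
Proof. intros. assert (D * a <= D * E) by (apply Rmult_le_compat_l; lra).
  assert (D * E <= Bd * E) by (apply Rmult_le_compat_r; lra). lra. Qed.

Lemma max_principle z w K : is_sol d f z w -> M0 <= K ->
  (forall x, w 0 x <= K) -> forall t x, 0 <= t -> w t x <= K.
Proof.
  intros Hs HK H0.
  pose proof Bd_nonneg as HBd.
  set (h := / (4 * Bd + 1)).
  assert (Hh : 0 < h) by (unfold h; apply Rinv_0_lt_compat; lra).
  assert (Hh2 : 2 * Bd * h <= / 2).
  { unfold h. apply (Rmult_le_reg_r (4 * Bd + 1)); [lra|].
    rewrite Rmult_assoc, Rinv_l by lra. lra. }
  intros t x Ht. revert x. apply (stepping (fun t => forall x, w t x <= K) h Hh H0); [|exact Ht].
  intros t0 Ht0 HP t1 Ht1.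
  destruct Hs as [Hder [Hrc Hbd]].
  destruct (Hbd (t0 + h)) as [B HB].
  set (S := fun v => exists s y, t0 <= s <= t0 + h /\ v = w s y - K).
  assert (HbS : bound S).
  { exists (B - K). intros v [s [y [Hsr ->]]]. specialize (HB s y ltac:(lra)).
    apply abs_le_inv in HB. lra. }
  assert (HnS : exists v, S v) by (exists (w t0 0 - K); exists t0, 0; split; [lra|auto]).
  destruct (completeness S HbS HnS) as [E [Hub Hlub]].
  set (E' := Rmax E 0).
  assert (HE'0 : 0 <= E') by apply Rmax_r.
  assert (HE'E : E <= E') by apply Rmax_l.
  assert (Hin : forall s y, t0 <= s <= t0 + h -> w s y - K <= E').
  { intros s y Hsr. assert (S (w s y - K)) by (exists s, y; split; auto). 
    specialize (Hub _ H). lra. }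
  assert (Hall : forall s x, t0 <= s <= t0 + h -> w s x - K <= 2 * Bd * E' * h).
  { intros s x Hsr.
    assert (0 <= 2 * Bd * E' * h) by (apply Rmult_le_pos; [apply Rmult_le_pos|]; lra).
    destruct (Req_dec s t0) as [->|Hne]; [specialize (HP x); lra|].
    assert (Hlc := last_crossing (fun s => w s x - K)
      (fun s => sc_rhs d f z s (fun y => w s y) x) t0 s (2 * Bd * E') ltac:(lra)).
    assert (2 * Bd * E' * (s - t0) <= 2 * Bd * E' * h).
    { apply Rmult_le_compat_l; [apply Rmult_le_pos|]; lra. }
    enough (w s x - K <= 2 * Bd * E' * (s - t0)) by lra.
    apply Hlc.
    - apply Rmult_le_pos; lra.
    - intros eps Heps. destruct (sol_rcont d f z w (conj Hder (conj Hrc Hbd)) t0 x Ht0 eps Heps)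
        as [del [Hdel Hx]]. exists del; split; auto. intros s' Hs'.
      replace (w s' x - K - (w t0 x - K)) with (w s' x - w t0 x) by ring. auto.
    - intros s' Hs'. apply deriv_sub_const. apply Hder. lra.
    - specialize (HP x). lra.
    - intros s' Hs' Hpos. unfold sc_rhs, ext.
      assert (Hi1 := Hin s' (x + 1) ltac:(lra)).
      assert (Hi2 := Hin s' (x - 1) ltac:(lra)).
      assert (HfN : f s' (flr (x + z)) (w s' x) < 0) by (apply HM0; lra).
      assert (Hprod : w s' x * f s' (flr (x + z)) (w s' x) < 0) by nra.
      assert (Ha := dterm_le (d s' (flr (x + z + 1))) (w s' (x + 1) - w s' x) E'
                     (conj (Hdpos _ _) (HdB _ _)) HE'0 ltac:(lra)).
      assert (Hb := dterm_le (d s' (flr (x + z - 1))) (w s' (x - 1) - w s' x) E'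
                     (conj (Hdpos _ _) (HdB _ _)) HE'0 ltac:(lra)).
      lra. }
  assert (HE : E <= 2 * Bd * E' * h).
  { apply Hlub. intros v [s [y [Hsr ->]]]. apply Hall; auto. }
  assert (HE'' : E' <= 2 * Bd * E' * h).
  { assert (Hp : 0 <= 2 * Bd * E' * h) by (apply Rmult_le_pos; [apply Rmult_le_pos|]; lra).
    exact (Rmax_lub E 0 _ HE Hp). }
  assert (E' = 0).
  { assert (2 * Bd * E' * h = (2 * Bd * h) * E') by ring.
    assert ((2 * Bd * h) * E' <= / 2 * E') by (apply Rmult_le_compat_r; lra). lra. }
  intros x. assert (w t1 x - K <= E').
  { apply Rle_trans with E; [|exact HE'E]. apply Hub. exists t1, x; split; auto. }
  lra.
Qed.

Lemma min_principle z w : is_sol d f z w ->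
  (forall x, 0 <= w 0 x) -> forall t x, 0 <= t -> 0 <= w t x.
Proof.
  intros Hs H0.
  pose proof Bd_nonneg as HBd. pose proof F0_nonneg as HF.
  set (A := 2 * Bd + F0).
  set (h := / (2 * A + 1)).
  assert (HA : 0 <= A) by (unfold A; lra).
  assert (Hh : 0 < h) by (unfold h; apply Rinv_0_lt_compat; lra).
  assert (Hh2 : A * h <= / 2).
  { unfold h. apply (Rmult_le_reg_r (2 * A + 1)); [lra|].
    rewrite Rmult_assoc, Rinv_l by lra. lra. }
  intros t x Ht. revert x. apply (stepping (fun t => forall x, 0 <= w t x) h Hh H0); [|exact Ht].
  intros t0 Ht0 HP t1 Ht1.
  destruct Hs as [Hder [Hrc Hbd]].
  destruct (Hbd (t0 + h)) as [B HB].
  set (S := fun v => exists s y, t0 <= s <= t0 + h /\ v = - w s y).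
  assert (HbS : bound S).
  { exists B. intros v [s [y [Hsr ->]]]. specialize (HB s y ltac:(lra)).
    apply abs_le_inv in HB. lra. }
  assert (HnS : exists v, S v) by (exists (- w t0 0); exists t0, 0; split; [lra|auto]).
  destruct (completeness S HbS HnS) as [E [Hub Hlub]].
  set (E' := Rmax E 0).
  assert (HE'0 : 0 <= E') by apply Rmax_r.
  assert (HE'E : E <= E') by apply Rmax_l.
  assert (Hin : forall s y, t0 <= s <= t0 + h -> - w s y <= E').
  { intros s y Hsr. assert (S (- w s y)) by (exists s, y; split; auto). 
    specialize (Hub _ H). lra. }
  assert (Hall : forall s x, t0 <= s <= t0 + h -> - w s x <= A * E' * h).
  { intros s x Hsr.
    assert (0 <= A * E' * h) by (apply Rmult_le_pos; [apply Rmult_le_pos|]; lra).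
    destruct (Req_dec s t0) as [->|Hne]; [specialize (HP x); lra|].
    assert (Hlc := last_crossing (fun s => - w s x)
      (fun s => - sc_rhs d f z s (fun y => w s y) x) t0 s (A * E') ltac:(lra)).
    assert (A * E' * (s - t0) <= A * E' * h).
    { apply Rmult_le_compat_l; [apply Rmult_le_pos|]; lra. }
    enough (- w s x <= A * E' * (s - t0)) by lra.
    apply Hlc.
    - apply Rmult_le_pos; lra.
    - intros eps Heps. destruct (sol_rcont d f z w (conj Hder (conj Hrc Hbd)) t0 x Ht0 eps Heps)
        as [del [Hdel Hx]]. exists del; split; auto. intros s' Hs'.
      replace (- w s' x - - w t0 x) with (- (w s' x - w t0 x)) by ring.
      rewrite Rabs_Ropp. auto.
    - intros s' Hs'. apply deriv_opp. apply Hder. lra.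
    - specialize (HP x). lra.
    - intros s' Hs' Hpos. unfold sc_rhs, ext.
      assert (Hi1 := Hin s' (x + 1) ltac:(lra)).
      assert (Hi2 := Hin s' (x - 1) ltac:(lra)).
      assert (Hi0 := Hin s' x ltac:(lra)).
      rewrite (Hneg _ _ (w s' x)) by lra.
      assert (Hf0 := HF0 s' (flr (x + z))). apply abs_le_inv in Hf0.
      assert (Hprod : (- w s' x) * f s' (flr (x + z)) 0 <= E' * F0).
      { assert ((- w s' x) * f s' (flr (x + z)) 0 <= (- w s' x) * F0)
          by (apply Rmult_le_compat_l; lra).
        assert ((- w s' x) * F0 <= E' * F0) by (apply Rmult_le_compat_r; lra). lra. }
      assert (Ha := dterm_le (d s' (flr (x + z + 1))) (- w s' (x + 1) - - w s' x) E'
                     (conj (Hdpos _ _) (HdB _ _)) HE'0 ltac:(lra)).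
      assert (Hb := dterm_le (d s' (flr (x + z - 1))) (- w s' (x - 1) - - w s' x) E'
                     (conj (Hdpos _ _) (HdB _ _)) HE'0 ltac:(lra)).
      unfold A. lra. }
  assert (HE : E <= A * E' * h).
  { apply Hlub. intros v [s [y [Hsr ->]]]. apply Hall; auto. }
  assert (HE'' : E' <= A * E' * h).
  { assert (Hp : 0 <= A * E' * h) by (apply Rmult_le_pos; [apply Rmult_le_pos|]; lra).
    exact (Rmax_lub E 0 _ HE Hp). }
  assert (E' = 0).
  { assert (A * E' * h = (A * h) * E') by ring.
    assert ((A * h) * E' <= / 2 * E') by (apply Rmult_le_compat_r; lra). lra. }
  intros x. assert (- w t1 x <= E').
  { apply Rle_trans with E; [|exact HE'E]. apply Hub. exists t1, x; split; auto. }
  lra.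
Qed.


Lemma L_nonneg : 0 <= L.
Proof.
  specialize (HL 0 0%Z 1 0). replace (1 - 0) with 1 in HL by ring.
  rewrite Rabs_R1 in HL. pose proof (Rabs_pos (f 0 0%Z 1 - f 0 0%Z 0)). lra.
Qed.

Lemma f_bound t j u B : Rabs u <= B -> Rabs (f t j u) <= F0 + L * B.
Proof.
  intros Hu. pose proof L_nonneg.
  replace (f t j u) with (f t j 0 + (f t j u - f t j 0)) by ring.
  eapply Rle_trans; [apply Rabs_triang|].
  specialize (HL t j u 0). replace (u - 0) with u in HL by ring.
  assert (L * Rabs u <= L * B) by (apply Rmult_le_compat_l; lra).
  specialize (HF0 t j). lra.
Qed.

Lemma abs_mul_le (a b A Bb : R) : Rabs a <= A -> Rabs b <= Bb -> Rabs (a * b) <= A * Bb.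
Proof.
  intros. rewrite Rabs_mult. apply Rmult_le_compat; auto; apply Rabs_pos.
Qed.

Lemma rhs_diff z s x (w1 w2 : R -> R) B E : 0 <= B ->
  (forall y, Rabs (w1 y) <= B) -> (forall y, Rabs (w2 y) <= B) ->
  (forall y, Rabs (w1 y - w2 y) <= E) ->
  Rabs (sc_rhs d f z s w1 x - sc_rhs d f z s w2 x) <= (4 * Bd + F0 + 2 * L * B) * E.
Proof.
  intros HB H1 H2 HE. unfold sc_rhs, ext.
  set (Da := d s (flr (x + z + 1))). set (Db := d s (flr (x + z - 1))).
  set (j := flr (x + z)).
  assert (HDa : Rabs Da <= Bd) by (rewrite Rabs_right; [apply HdB|apply Rle_ge, Hdpos]).
  assert (HDb : Rabs Db <= Bd) by (rewrite Rabs_right; [apply HdB|apply Rle_ge, Hdpos]).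
  assert (HX : Rabs ((w1 (x + 1) - w1 x) - (w2 (x + 1) - w2 x)) <= 2 * E).
  { replace ((w1 (x + 1) - w1 x) - (w2 (x + 1) - w2 x)) with
      ((w1 (x + 1) - w2 (x + 1)) + - (w1 x - w2 x)) by ring.
    eapply Rle_trans; [apply Rabs_triang|]. rewrite Rabs_Ropp.
    pose proof (HE (x + 1)); pose proof (HE x); lra. }
  assert (HY : Rabs ((w1 (x - 1) - w1 x) - (w2 (x - 1) - w2 x)) <= 2 * E).
  { replace ((w1 (x - 1) - w1 x) - (w2 (x - 1) - w2 x)) with
      ((w1 (x - 1) - w2 (x - 1)) + - (w1 x - w2 x)) by ring.
    eapply Rle_trans; [apply Rabs_triang|]. rewrite Rabs_Ropp.
    pose proof (HE (x - 1)); pose proof (HE x); lra. }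
  assert (HZ : Rabs (w1 x * f s j (w1 x) - w2 x * f s j (w2 x)) <= (F0 + L * B) * E + B * (L * E)).
  { replace (w1 x * f s j (w1 x) - w2 x * f s j (w2 x)) with
      ((w1 x - w2 x) * f s j (w1 x) + w2 x * (f s j (w1 x) - f s j (w2 x))) by ring.
    eapply Rle_trans; [apply Rabs_triang|].
    assert (Rabs ((w1 x - w2 x) * f s j (w1 x)) <= E * (F0 + L * B))
      by (apply abs_mul_le; auto; apply f_bound; auto).
    assert (Rabs (w2 x * (f s j (w1 x) - f s j (w2 x))) <= B * (L * E)).
    { apply abs_mul_le; auto. eapply Rle_trans; [apply HL|].
      apply Rmult_le_compat_l; [apply L_nonneg|auto]. }
    lra. }
  replace (Da * (w1 (x + 1) - w1 x) + Db * (w1 (x - 1) - w1 x) + w1 x * f s j (w1 x) -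
    (Da * (w2 (x + 1) - w2 x) + Db * (w2 (x - 1) - w2 x) + w2 x * f s j (w2 x))) with
    (Da * ((w1 (x + 1) - w1 x) - (w2 (x + 1) - w2 x)) +
     Db * ((w1 (x - 1) - w1 x) - (w2 (x - 1) - w2 x)) +
     (w1 x * f s j (w1 x) - w2 x * f s j (w2 x))) by ring.
  eapply Rle_trans; [apply Rabs_triang|].
  eapply Rle_trans; [apply Rplus_le_compat_r; apply Rabs_triang|].
  assert (A1 := abs_mul_le _ _ _ _ HDa HX).
  assert (A2 := abs_mul_le _ _ _ _ HDb HY).
  lra.
Qed.


Lemma rcont_diff (g1 g2 : R -> R) a : rcont g1 a -> rcont g2 a -> rcont (fun s => g1 s - g2 s) a.
Proof.
  intros H1 H2 eps Heps.
  destruct (H1 (eps/2) ltac:(lra)) as [d1 [Hd1 Hx1]].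
  destruct (H2 (eps/2) ltac:(lra)) as [d2 [Hd2 Hx2]].
  exists (Rmin d1 d2); split; [apply Rmin_glb_lt; auto|].
  intros s Hs. pose proof (Rmin_l d1 d2). pose proof (Rmin_r d1 d2).
  specialize (Hx1 s ltac:(lra)). specialize (Hx2 s ltac:(lra)).
  replace (g1 s - g2 s - (g1 a - g2 a)) with ((g1 s - g1 a) + - (g2 s - g2 a)) by ring.
  eapply Rle_lt_trans; [apply Rabs_triang|]. rewrite Rabs_Ropp. lra.
Qed.

Lemma uniqueness z w1 w2 : is_sol d f z w1 -> is_sol d f z w2 ->
  (forall x, w1 0 x = w2 0 x) -> forall t x, 0 <= t -> w1 t x = w2 t x.
Proof.
  intros Hs1 Hs2 H0 tau x Htau.
  pose proof Bd_nonneg as HBd. pose proof F0_nonneg as HF. pose proof L_nonneg as HL0.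
  destruct Hs1 as [Hder1 [Hrc1 Hbd1]]. destruct Hs2 as [Hder2 [Hrc2 Hbd2]].
  destruct (Hbd1 tau) as [B1 HB1]. destruct (Hbd2 tau) as [B2 HB2].
  set (B := Rmax B1 B2).
  assert (HBB1 : B1 <= B) by apply Rmax_l. assert (HBB2 : B2 <= B) by apply Rmax_r.
  assert (HB0 : 0 <= B) by (specialize (HB1 0 0 ltac:(lra)); pose proof (Rabs_pos (w1 0 0)); lra).
  set (Lip := 4 * Bd + F0 + 2 * L * B).
  assert (HLip : 0 <= Lip) by (unfold Lip; assert (0 <= L * B) by (apply Rmult_le_pos; lra); lra).
  set (h := / (2 * Lip + 1)).
  assert (Hh : 0 < h) by (unfold h; apply Rinv_0_lt_compat; lra).
  assert (Hh2 : Lip * h <= / 2).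
  { unfold h. apply (Rmult_le_reg_r (2 * Lip + 1)); [lra|].
    rewrite Rmult_assoc, Rinv_l by lra. lra. }
  enough (Hmain : forall t, 0 <= t -> t <= tau -> forall y, w1 t y = w2 t y)
    by (apply Hmain; lra).
  intros t Ht.
  apply (stepping (fun t => t <= tau -> forall y, w1 t y = w2 t y) h Hh); [intros; auto| |exact Ht].
  intros t0 Ht0 HP t1 Ht1 Ht1tau.
  specialize (HP ltac:(lra)).
  set (S := fun v => exists s y, t0 <= s <= t1 /\ v = Rabs (w1 s y - w2 s y)).
  assert (HbS : bound S).
  { exists (B + B). intros v [s [y [Hsr ->]]].
    specialize (HB1 s y ltac:(lra)). specialize (HB2 s y ltac:(lra)).
    unfold Rminus. eapply Rle_trans; [apply Rabs_triang|]. rewrite Rabs_Ropp. lra. }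
  assert (HnS : exists v, S v) by (exists (Rabs (w1 t0 0 - w2 t0 0)); exists t0, 0; split; [lra|auto]).
  destruct (completeness S HbS HnS) as [E [Hub Hlub]].
  assert (HE0 : 0 <= E).
  { apply Rle_trans with (Rabs (w1 t0 0 - w2 t0 0)); [apply Rabs_pos|].
    apply Hub. exists t0, 0; split; [lra|auto]. }
  assert (Hin : forall s y, t0 <= s <= t1 -> Rabs (w1 s y - w2 s y) <= E).
  { intros s y Hsr. apply Hub. exists s, y; split; auto. }
  assert (Hall : forall s y, t0 <= s <= t1 -> Rabs (w1 s y - w2 s y) <= Lip * E * h).
  { intros s y Hsr.
    assert (0 <= Lip * E * h) by (apply Rmult_le_pos; [apply Rmult_le_pos|]; lra).
    destruct (Req_dec s t0) as [->|Hne]; [rewrite HP; unfold Rminus; rewrite Rplus_opp_r, Rabs_R0; lra|].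
    assert (Hm := mvt_rc (fun s => w1 s y - w2 s y)
      (fun s => sc_rhs d f z s (fun y => w1 s y) y - sc_rhs d f z s (fun y => w2 s y) y)
      t0 s (Lip * E) ltac:(lra) ltac:(apply Rmult_le_pos; lra)).
    assert (Lip * E * (s - t0) <= Lip * E * h).
    { apply Rmult_le_compat_l; [apply Rmult_le_pos|]; lra. }
    simpl in Hm. rewrite (HP y) in Hm. replace (w2 t0 y - w2 t0 y) with 0 in Hm by ring.
    rewrite Rminus_0_r in Hm.
    enough (Rabs (w1 s y - w2 s y) <= Lip * E * (s - t0)) by lra.
    apply Hm.
    - apply rcont_diff.
      + apply (sol_rcont d f z w1 (conj Hder1 (conj Hrc1 Hbd1))); lra.
      + apply (sol_rcont d f z w2 (conj Hder2 (conj Hrc2 Hbd2))); lra.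
    - intros s' Hs'. apply deriv_diff; [apply Hder1|apply Hder2]; lra.
    - intros s' Hs'. unfold Lip. apply rhs_diff; auto.
      + intros y'. specialize (HB1 s' y' ltac:(lra)). lra.
      + intros y'. specialize (HB2 s' y' ltac:(lra)). lra.
      + intros y'. apply Hin. lra. }
  assert (HE : E <= Lip * E * h).
  { apply Hlub. intros v [s [y [Hsr ->]]]. apply Hall; auto. }
  assert (E = 0).
  { assert (Lip * E * h = (Lip * h) * E) by ring.
    assert ((Lip * h) * E <= / 2 * E) by (apply Rmult_le_compat_r; lra). lra. }
  intros y. specialize (Hin t1 y ltac:(lra)).
  assert (Rabs (w1 t1 y - w2 t1 y) = 0) by (pose proof (Rabs_pos (w1 t1 y - w2 t1 y)); lra).
  destruct (Req_dec (w1 t1 y) (w2 t1 y)) as [|Hn]; [auto|exfalso]. apply Rminus_eq_contra in Hn. apply Rabs_no_R0 in Hn. contradiction.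
Qed.

End Sol.

Lemma two_exp_bound a b' m m' : 0 < a -> 0 < b' -> 0 < m < m' ->
  exists V, forall y, a * exp (- m * y) - b' * exp (- m' * y) <= V.
Proof.
  intros Ha Hb Hm.
  set (y1 := - (a / b') / (m' - m) - 1).
  exists (a * exp (- m * y1)). intros y.
  destruct (Rle_lt_dec y1 y) as [Hy|Hy].
  - assert (exp (- m * y) <= exp (- m * y1)).
    { destruct (Req_dec y y1) as [->|]; [lra|]. left; apply exp_increasing. nra. }
    pose proof (exp_pos (- m' * y)). assert (0 < b' * exp (- m' * y)) by (apply Rmult_lt_0_compat; lra).
    assert (a * exp (- m * y) <= a * exp (- m * y1)) by (apply Rmult_le_compat_l; lra).
    lra.
  - assert (Hk : a / b' < exp (- (m' - m) * y)).
    { assert (- (m' - m) * y > a / b' + (m' - m)).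
      { unfold y1 in Hy. assert (Hmm : 0 < m' - m) by lra.
        assert (y * (m' - m) < (- (a / b') / (m' - m) - 1) * (m' - m)) by (apply Rmult_lt_compat_r; lra).
        replace ((- (a / b') / (m' - m) - 1) * (m' - m)) with (- (a / b') - (m' - m)) in H by (field; lra).
        lra. }
      assert (0 < a / b') by (unfold Rdiv; apply Rmult_lt_0_compat; [lra|apply Rinv_0_lt_compat; lra]).
      assert (- (m' - m) * y <> 0) by lra.
      pose proof (exp_ineq1 _ H1). lra. }
    replace (exp (- m' * y)) with (exp (- m * y) * exp (- (m' - m) * y))
      by (rewrite <- exp_plus; f_equal; ring).
    assert (a <= b' * exp (- (m' - m) * y)).
    { apply (Rmult_le_reg_r (/ b')); [apply Rinv_0_lt_compat; lra|].
      replace (b' * exp (- (m' - m) * y) * / b') with (exp (- (m' - m) * y)) by (field; lra).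
      unfold Rdiv in Hk. lra. }
    pose proof (exp_pos (- m * y)). pose proof (exp_pos (- m * y1)).
    assert (a * exp (- m * y) <= b' * exp (- (m' - m) * y) * exp (- m * y))
      by (apply Rmult_le_compat_r; lra).
    assert (0 <= a * exp (- m * y1)) by (apply Rmult_le_pos; lra).
    nra.
Qed.

Section Data.
Variables (T : R) (J : Z) (d : R -> Z -> R) (f : R -> Z -> R -> R)
  (uplus : R -> Z -> R) (lam : R -> R) (psi : R -> R -> Z -> R)
  (c mu mu' dd d1 b N M : R).
Hypothesis HJ : (0 < J)%Z.
Hypothesis Hup : is_uplus d f uplus.
Hypothesis Heig : is_eigen T J d f lam psi.
Hypothesis Hmu : 0 < mu /\ mu < mu'.
Hypothesis Hdd : 0 < dd.
Hypothesis Hd1 : 0 < d1.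
Hypothesis Hb : 0 < b.
Hypothesis HNM : N <= M.
Hypothesis HM : forall t x z, N <= x - c * t <= M ->
          b * ext (psi 0) t (x + z) <= vlow psi c mu mu' dd d1 t x z.

Lemma vup_pos t x z : 0 < vup psi c mu mu' dd d1 t x z.
Proof.
  unfold vup, ext. destruct (Heig mu) as [Hp _]. destruct (Heig mu') as [Hp' _].
  specialize (Hp t (flr (x + z))). specialize (Hp' t (flr (x + z))).
  pose proof (exp_pos (- mu * (x - c * t))). pose proof (exp_pos (- mu' * (x - c * t))).
  assert (0 < dd * exp (- mu * (x - c * t)) * psi mu t (flr (x + z)))
    by (repeat apply Rmult_lt_0_compat; auto).
  assert (0 < d1 * exp (- mu' * (x - c * t)) * psi mu' t (flr (x + z)))
    by (repeat apply Rmult_lt_0_compat; auto).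
  lra.
Qed.

Lemma uupper_bounds : exists K, forall y z, 0 <= uupper psi uplus c mu mu' dd d1 0 y z <= K.
Proof.
  destruct Hup as [_ [a [B [Ha HB]]]].
  exists B. intros y z. unfold uupper.
  pose proof (vup_pos 0 y z). specialize (HB 0 (flr (y + z))). unfold ext.
  split.
  - apply Rmin_glb; lra.
  - eapply Rle_trans; [apply Rmin_r|]. lra.
Qed.

Lemma ulow_bounds : exists K, forall y z, 0 <= ulow psi c mu mu' dd d1 b M 0 y z <= K.
Proof.
  destruct (per_bound (fun j => psi 0 0 j) J HJ) as [G0 HG0].
  { intros j. destruct (Heig 0) as [_ [_ [Hj _]]]. apply Hj. }
  destruct (per_bound (fun j => psi mu 0 j) J HJ) as [Pm HPm].
  { intros j. destruct (Heig mu) as [_ [_ [Hj _]]]. apply Hj. }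
  destruct (per_lower (fun j => psi mu' 0 j) J HJ) as [Qm [HQm HQ]].
  { intros j. destruct (Heig mu') as [_ [_ [Hj _]]]. apply Hj. }
  { intros j. destruct (Heig mu') as [Hj _]. apply Hj. }
  assert (HPm0 : 0 < Pm).
  { specialize (HPm 0%Z). destruct (Heig mu) as [Hj _]. specialize (Hj 0 0%Z).
    rewrite Rabs_right in HPm; lra. }
  destruct (two_exp_bound (dd * Pm) (d1 * Qm) mu mu') as [V HV].
  { apply Rmult_lt_0_compat; lra. } { apply Rmult_lt_0_compat; lra. } { lra. }
  assert (Hvlow : forall y z, vlow psi c mu mu' dd d1 0 y z <= V).
  { intros y z. unfold vlow, ext.
    specialize (HV (y - c * 0)).
    set (k := flr (y + z)).
    specialize (HPm k). specialize (HQ k). simpl in HPm, HQ.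
    destruct (Heig mu) as [Hp _]. specialize (Hp 0 k).
    rewrite Rabs_right in HPm by lra.
    pose proof (exp_pos (- mu * (y - c * 0))). pose proof (exp_pos (- mu' * (y - c * 0))).
    assert (dd * exp (- mu * (y - c * 0)) * psi mu 0 k <= dd * Pm * exp (- mu * (y - c * 0))).
    { replace (dd * Pm * exp (- mu * (y - c * 0))) with (dd * exp (- mu * (y - c * 0)) * Pm) by ring.
      apply Rmult_le_compat_l; [apply Rmult_le_pos|]; lra. }
    assert (d1 * Qm * exp (- mu' * (y - c * 0)) <= d1 * exp (- mu' * (y - c * 0)) * psi mu' 0 k).
    { replace (d1 * Qm * exp (- mu' * (y - c * 0))) with (d1 * exp (- mu' * (y - c * 0)) * Qm) by ring.
      apply Rmult_le_compat_l; [apply Rmult_le_pos|]; lra. }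
    lra. }
  exists (Rmax (b * G0) V). intros y z. unfold ulow.
  destruct (Rle_dec y (M + c * 0)) as [Hy|Hy].
  - split.
    + apply Rle_trans with (b * ext (psi 0) 0 (y + z)); [|apply Rmax_l].
      unfold ext. destruct (Heig 0) as [Hj _]. specialize (Hj 0 (flr (y + z))).
      apply Rmult_le_pos; lra.
    + apply Rmax_lub.
      * apply Rle_trans with (b * G0); [|apply Rmax_l].
        apply Rmult_le_compat_l; [lra|]. unfold ext.
        specialize (HG0 (flr (y + z))). simpl in HG0. eapply Rle_trans; [apply Rle_abs|exact HG0].
      * eapply Rle_trans; [apply Hvlow|apply Rmax_r].
    - split; [|eapply Rle_trans; [apply Hvlow|apply Rmax_r]].
      set (z2 := y + z - M).
      assert (H := HM 0 M z2 ltac:(lra)).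
      unfold vlow, ext in *.
      replace (M + z2) with (y + z) in H by (unfold z2; ring).
      set (k := flr (y + z)) in *.
      destruct (Heig 0) as [Hp0 _]. specialize (Hp0 0 k).
      destruct (Heig mu) as [Hp _]. specialize (Hp 0 k).
      destruct (Heig mu') as [Hp' _]. specialize (Hp' 0 k).
      assert (Hpos : 0 < dd * exp (- mu * (M - c * 0)) * psi mu 0 k
                       - d1 * exp (- mu' * (M - c * 0)) * psi mu' 0 k).
      { assert (0 < b * psi 0 0 k) by (apply Rmult_lt_0_compat; auto). lra. }
      set (e1 := exp (- mu * (y - M))). set (e2 := exp (- mu' * (y - M))).
      assert (He2 : e2 <= e1).
      { unfold e1, e2. left. apply exp_increasing. nra. }
      assert (He1 : 0 < e1) by apply exp_pos.
      assert (He2p : 0 < e2) by apply exp_pos.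
      replace (exp (- mu * (y - c * 0))) with (exp (- mu * (M - c * 0)) * e1)
        by (unfold e1; rewrite <- exp_plus; f_equal; ring).
      replace (exp (- mu' * (y - c * 0))) with (exp (- mu' * (M - c * 0)) * e2)
        by (unfold e2; rewrite <- exp_plus; f_equal; ring).
      pose proof (exp_pos (- mu' * (M - c * 0))).
      assert (0 <= d1 * exp (- mu' * (M - c * 0)) * psi mu' 0 k * (e1 - e2))
        by (apply Rmult_le_pos; [repeat apply Rmult_le_pos|]; lra).
      assert (0 <= e1 * (dd * exp (- mu * (M - c * 0)) * psi mu 0 k
                       - d1 * exp (- mu' * (M - c * 0)) * psi mu' 0 k)) by (apply Rmult_le_pos; lra).
      nra.
Qed.
End Data.

Lemma CV_const (a : R) : Un_cv (fun _ => a) a.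
Proof. intros e He. exists O. intros n _. unfold Rdist. rewrite Rminus_diag, Rabs_R0. auto. Qed.

Lemma CV_lip (phi : R -> R) (L : R) (a : nat -> R) (l : R) :
  (forall u v, Rabs (phi u - phi v) <= L * Rabs (u - v)) -> Un_cv a l ->
  Un_cv (fun n => phi (a n)) (phi l).
Proof.
  intros Hphi Ha e He.
  assert (HL : 0 <= L).
  { specialize (Hphi 1 0). replace (1 - 0) with 1 in Hphi by ring. rewrite Rabs_R1 in Hphi.
    pose proof (Rabs_pos (phi 1 - phi 0)). lra. }
  destruct (Ha (e / (L + 1))) as [N HN].
  { apply Rdiv_lt_0_compat; lra. }
  exists N. intros n Hn. specialize (HN n Hn). unfold Rdist in *.
  eapply Rle_lt_trans; [apply Hphi|].
  apply Rle_lt_trans with ((L + 1) * Rabs (a n - l)).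
  { apply Rmult_le_compat_r; [apply Rabs_pos|lra]. }
  apply (Rmult_lt_reg_r (/ (L + 1))); [apply Rinv_0_lt_compat; lra|].
  replace ((L + 1) * Rabs (a n - l) * / (L + 1)) with (Rabs (a n - l)) by (field; lra).
  unfold Rdiv in HN. lra.
Qed.

Lemma CV_le (a : nat -> R) (l r : R) (N : nat) : Un_cv a l ->
  (forall n, (N <= n)%nat -> Rabs (a n) <= r) -> Rabs l <= r.
Proof.
  intros Ha Hb. destruct (Rle_lt_dec (Rabs l) r) as [H|H]; [exact H|exfalso].
  destruct (Ha (Rabs l - r)) as [N' HN]; [lra|].
  specialize (HN (Nat.max N N') ltac:(lia)). specialize (Hb (Nat.max N N') ltac:(lia)).
  unfold Rdist in HN. pose proof (Rabs_triang_inv l (a (Nat.max N N'))).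
  rewrite <- Rabs_Ropp in HN. replace (- (a (Nat.max N N') - l)) with (l - a (Nat.max N N')) in HN by ring.
  lra.
Qed.

Lemma CV_bounds (a : nat -> R) (l lo hi : R) (N : nat) : Un_cv a l ->
  (forall n, (N <= n)%nat -> lo <= a n <= hi) -> lo <= l <= hi.
Proof.
  intros Ha Hb. split.
  - destruct (Rle_lt_dec lo l) as [H|H]; [exact H|exfalso].
    destruct (Ha (lo - l)) as [N' HN]; [lra|].
    specialize (HN (Nat.max N N') ltac:(lia)). specialize (Hb (Nat.max N N') ltac:(lia)).
    unfold Rdist in HN. apply abs_lt_inv in HN. lra.
  - destruct (Rle_lt_dec l hi) as [H|H]; [exact H|exfalso].
    destruct (Ha (l - hi)) as [N' HN]; [lra|].
    specialize (HN (Nat.max N N') ltac:(lia)). specialize (Hb (Nat.max N N') ltac:(lia)).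
    unfold Rdist in HN. apply abs_lt_inv in HN. lra.
Qed.

Lemma cont_eps (g : R -> R) (a : R) : continuity_pt g a ->
  forall eps, 0 < eps -> exists del, 0 < del /\
    forall s, Rabs (s - a) < del -> Rabs (g s - g a) < eps.
Proof.
  intros Hc eps Heps.
  destruct (Hc eps Heps) as [del [Hdel Hx]].
  exists del; split; [lra|]. intros s Hs.
  destruct (Req_dec s a) as [->|Hne].
  - unfold Rminus; rewrite Rplus_opp_r, Rabs_R0; lra.
  - apply (Hx s). split; [split; [exact I| auto] | exact Hs].
Qed.

Lemma rpow_small (e a : R) : 0 < e -> 0 < a -> exists r0, 0 < r0 /\
  forall r, 0 < r < r0 -> Rpower r a < e.
Proof.
  intros He Ha. exists (exp (ln e / a)). split; [apply exp_pos|].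
  intros r Hr. unfold Rpower.
  assert (ln r < ln e / a).
  { rewrite <- (ln_exp (ln e / a)). apply ln_increasing; lra. }
  rewrite <- (exp_ln e) by lra. apply exp_increasing.
  apply (Rmult_lt_reg_r (/ a)); [apply Rinv_0_lt_compat; lra|].
  replace (a * ln r * / a) with (ln r) by (field; lra). exact H.
Qed.

Lemma ev_big (T r : R) : 0 < T -> exists N : nat, forall n, (N <= n)%nat -> r < INR n * T.
Proof.
  intros HT. destruct (INR_archimed T r HT) as [N HN].
  exists N. intros n Hn. pose proof (le_INR _ _ Hn).
  assert (INR N * T <= INR n * T) by (apply Rmult_le_compat_r; lra). lra.
Qed.

Lemma deriv_shift (F : R -> R) (a t l : R) : derivable_pt_lim F (t + a) l ->
  derivable_pt_lim (fun s => F (s + a)) t l.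
Proof.
  intros H.
  assert (Hid : derivable_pt_lim (fun s => s + a) t 1).
  { replace 1 with (1 + 0) by ring.
    change (derivable_pt_lim (plus_fct id (fct_cte a)) t (1 + 0)).
    apply derivable_pt_lim_plus; [apply derivable_pt_lim_id|apply derivable_pt_lim_const]. }
  assert (Hc := derivable_pt_lim_comp (fun s => s + a) F t 1 l Hid H).
  rewrite Rmult_1_r in Hc. exact Hc.
Qed.

Section Core.
Variables (T : R) (d : R -> Z -> R) (f : R -> Z -> R -> R) (Bd F0 L M0 alpha : R)
  (U : R -> R -> (R -> R) -> R -> R) (z c K : R) (dat : nat -> R -> R) (V : R -> R -> R).
Hypothesis HT : 0 < T.
Hypothesis Hdpos : forall t j, 0 <= d t j.
Hypothesis HdB : forall t j, d t j <= Bd.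
Hypothesis Hdcont : forall j, continuity (fun t => d t j).
Hypothesis HdT : forall t j, d (t + T) j = d t j.
Hypothesis HF0 : forall t j, Rabs (f t j 0) <= F0.
Hypothesis HL : forall t j u v, Rabs (f t j u - f t j v) <= L * Rabs (u - v).
Hypothesis Hneg : forall t j u, u <= 0 -> f t j u = f t j 0.
Hypothesis HM0 : forall t j u, M0 <= u -> f t j u < 0.
Hypothesis HM0p : 0 < M0.
Hypothesis HfT : forall t j u, f (t + T) j u = f t j u.
Hypothesis Halpha : 0 < alpha.
Hypothesis Hhol : forall R0, exists C, forall t s j u, Rabs u <= R0 -> Rabs (t - s) <= 1 ->
       Rabs (f t j u - f s j u) <= C * Rpower (Rabs (t - s)) alpha.
Hypothesis HU : is_sol_map d f U.
Hypothesis HK : M0 <= K.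
Hypothesis Hdat : forall n y, 0 <= dat n y <= K.

Definition G (n : nat) (t x : R) : R :=
  U (t + INR n * T) (x + c * INR n * T) (dat n) (z - c * INR n * T).

Hypothesis HV : forall t x, Un_cv (fun n => G n t x) (V t x).

Lemma K_nonneg : 0 <= K.
Proof. lra. Qed.

Lemma w_sol n : is_sol d f (z - c * INR n * T) (fun t x => U t x (dat n) (z - c * INR n * T)).
Proof.
  destruct (HU (dat n) (z - c * INR n * T)) as [_ [Hder [Hrc Hbd]]].
  { exists K. intros x. specialize (Hdat n x). rewrite Rabs_right; lra. }
  split; [exact Hder|split; [|exact Hbd]].
  intros x eps Heps. destruct (Hrc x eps Heps) as [del [Hdel Hx]].
  exists del; split; auto. intros s Hs. apply Hx. lra.
Qed.

Lemma G_bounds n t x : 0 <= t + INR n * T -> 0 <= G n t x <= K.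
Proof.
  intros Ht. unfold G.
  destruct (HU (dat n) (z - c * INR n * T)) as [H0 _].
  { exists K. intros y. specialize (Hdat n y). rewrite Rabs_right; lra. }
  split.
  - apply (min_principle d f Bd F0 Hdpos HdB HF0 Hneg _ _ (w_sol n)); auto.
    intros y. rewrite H0. apply Hdat.
  - apply (max_principle d f Bd M0 Hdpos HdB HM0 HM0p _ _ K (w_sol n)); auto.
    intros y. rewrite H0. apply Hdat.
Qed.

Lemma per_d n t j : d (t + INR n * T) j = d t j.
Proof. exact (per_nat (fun t => d t j) T (fun t => HdT t j) n t). Qed.
Lemma per_f n t j u : f (t + INR n * T) j u = f t j u.
Proof. exact (per_nat (fun t => f t j u) T (fun t => HfT t j u) n t). Qed.

Lemma rhs_shift n t x :
  sc_rhs d f (z - c * INR n * T) (t + INR n * T)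
    (fun y => U (t + INR n * T) y (dat n) (z - c * INR n * T)) (x + c * INR n * T)
  = sc_rhs d f z t (fun y => G n t y) x.
Proof.
  unfold sc_rhs, ext, G.
  replace (x + c * INR n * T + (z - c * INR n * T) + 1) with (x + z + 1) by ring.
  replace (x + c * INR n * T + (z - c * INR n * T) - 1) with (x + z - 1) by ring.
  replace (x + c * INR n * T + (z - c * INR n * T)) with (x + z) by ring.
  replace (x + c * INR n * T + 1) with (x + 1 + c * INR n * T) by ring.
  replace (x + c * INR n * T - 1) with (x - 1 + c * INR n * T) by ring.
  rewrite !per_d, per_f. reflexivity.
Qed.

Lemma G_deriv n t x : 0 < t + INR n * T ->
  derivable_pt_lim (fun s => G n s x) t (sc_rhs d f z t (fun y => G n t y) x).
Proof.
  intros Ht. rewrite <- rhs_shift.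
  destruct (w_sol n) as [Hder _].
  apply (deriv_shift (fun s => U s (x + c * INR n * T) (dat n) (z - c * INR n * T)) (INR n * T) t).
  apply (Hder (t + INR n * T) (x + c * INR n * T) Ht).
Qed.

Definition Cd := (4 * Bd + F0 + 2 * L * K) * K.

Lemma rhs_bound z' s x (w : R -> R) : (forall y, Rabs (w y) <= K) ->
  Rabs (sc_rhs d f z' s w x) <= Cd.
Proof.
  intros Hw. unfold Cd.
  assert (H := rhs_diff d f Bd F0 L Hdpos HdB HF0 HL z' s x w (fun _ => 0) K K K_nonneg Hw).
  replace (sc_rhs d f z' s (fun _ => 0) x) with 0 in H by (unfold sc_rhs; ring).
  rewrite Rminus_0_r in H. apply H.
  - intros; rewrite Rabs_R0; lra.
  - intros y. rewrite Rminus_0_r. auto.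
Qed.

Lemma G_rhs_bound n t x : 0 <= t + INR n * T -> Rabs (sc_rhs d f z t (fun y => G n t y) x) <= Cd.
Proof.
  intros Ht. apply rhs_bound. intros y. destruct (G_bounds n t y Ht). rewrite Rabs_right; lra.
Qed.

Lemma G_lip n t1 t2 x : 0 < t1 + INR n * T -> 0 < t2 + INR n * T ->
  Rabs (G n t1 x - G n t2 x) <= Cd * Rabs (t1 - t2).
Proof.
  intros H1 H2.
  assert (Hgen : forall a b, a < b -> 0 < a + INR n * T -> Rabs (G n b x - G n a x) <= Cd * (b - a)).
  { intros a b Hab Ha.
    destruct (MVT_cor2 (fun s => G n s x) (fun s => sc_rhs d f z s (fun y => G n s y) x) a b Hab)
      as [xi [Hxi Hxi2]].
    { intros s Hs. apply G_deriv. lra. }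
    rewrite Hxi, Rabs_mult, (Rabs_right (b - a)) by lra.
    apply Rmult_le_compat_r; [lra|]. apply G_rhs_bound. lra. }
  destruct (Rtotal_order t1 t2) as [Hl|[He|Hg]].
  - rewrite (Rabs_minus_sym (G n t1 x)).
    rewrite (Rabs_left (t1 - t2)) by lra. replace (- (t1 - t2)) with (t2 - t1) by ring. auto.
  - subst. unfold Rminus. rewrite !Rplus_opp_r, Rabs_R0. lra.
  - rewrite (Rabs_right (t1 - t2)) by lra. auto.
Qed.


Lemma V_bounds t x : 0 <= V t x <= K.
Proof.
  destruct (ev_big T (Rabs t) HT) as [N HN].
  apply (CV_bounds (fun n => G n t x) (V t x) 0 K N (HV t x)).
  intros n Hn. apply G_bounds. specialize (HN n Hn).
  pose proof (Rle_abs (- t)). rewrite Rabs_Ropp in H. lra.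
Qed.

Lemma hconv s x : Un_cv (fun n => sc_rhs d f z s (fun y => G n s y) x)
                        (sc_rhs d f z s (fun y => V s y) x).
Proof.
  unfold sc_rhs.
  apply CV_plus; [apply CV_plus|].
  - apply CV_mult; [apply CV_const|apply CV_minus; apply HV].
  - apply CV_mult; [apply CV_const|apply CV_minus; apply HV].
  - apply CV_mult; [apply HV|].
    apply (CV_lip (fun u => f s (flr (x + z)) u) L); [|apply HV].
    intros u v. apply HL.
Qed.

Lemma prod_diff (X Y X0 Y0 Xm Ym : R) : Rabs Y <= Ym -> Rabs X0 <= Xm ->
  Rabs (X * Y - X0 * Y0) <= Rabs (X - X0) * Ym + Xm * Rabs (Y - Y0).
Proof.
  intros HY HX.
  replace (X * Y - X0 * Y0) with ((X - X0) * Y + X0 * (Y - Y0)) by ring.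
  eapply Rle_trans; [apply Rabs_triang|]. rewrite !Rabs_mult.
  apply Rplus_le_compat.
  - apply Rmult_le_compat_l; [apply Rabs_pos|auto].
  - apply Rmult_le_compat_r; [apply Rabs_pos|auto].
Qed.

Lemma abs_sub3 (a b c0 : R) : Rabs (a - c0) <= Rabs (a - b) + Rabs (b - c0).
Proof.
  replace (a - c0) with ((a - b) + (b - c0)) by ring. apply Rabs_triang.
Qed.

Lemma equicont s0 x eps : 0 < eps -> exists del N, 0 < del /\ forall n, (N <= n)%nat ->
  forall s, 0 < Rabs (s - s0) < del ->
  Rabs (sc_rhs d f z s (fun y => G n s y) x - sc_rhs d f z s0 (fun y => G n s0 y) x) <= eps.
Proof.
  intros Heps.
  pose proof (Bd_nonneg d Bd Hdpos HdB) as HBd.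
  pose proof (F0_nonneg f F0 HF0) as HF.
  pose proof (L_nonneg f L HL) as HL0.
  assert (HCd : 0 <= Cd).
  { unfold Cd. apply Rmult_le_pos; [|lra]. assert (0 <= L * K) by (apply Rmult_le_pos; lra). lra. }
  destruct (Hhol K) as [C HC].
  set (CH := Rabs C).
  assert (HCH : 0 <= CH) by apply Rabs_pos.
  set (ja := flr (x + z + 1)). set (jb := flr (x + z - 1)). set (j0 := flr (x + z)).
  set (e1 := eps / (8 * (K + 1))).
  assert (He1 : 0 < e1) by (unfold e1; apply Rdiv_lt_0_compat; lra).
  destruct (cont_eps (fun t => d t ja) s0 (Hdcont ja s0) e1 He1) as [da [Hda Hxa]].
  destruct (cont_eps (fun t => d t jb) s0 (Hdcont jb s0) e1 He1) as [db [Hdb Hxb]].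
  set (P := 4 * Bd * Cd + Cd * (F0 + L * K) + K * (L * Cd)).
  assert (HP : 0 <= P).
  { unfold P. assert (0 <= L * K) by (apply Rmult_le_pos; lra).
    assert (0 <= Bd * Cd) by (apply Rmult_le_pos; lra).
    assert (0 <= Cd * (F0 + L * K)) by (apply Rmult_le_pos; lra).
    assert (0 <= K * (L * Cd)) by (apply Rmult_le_pos; [lra|apply Rmult_le_pos; lra]). lra. }
  set (dP := eps / (4 * (P + 1))).
  assert (HdP : 0 < dP) by (unfold dP; apply Rdiv_lt_0_compat; lra).
  set (e3 := eps / (4 * (K * CH + 1))).
  assert (HKC : 0 <= K * CH) by (apply Rmult_le_pos; lra).
  assert (He3 : 0 < e3) by (unfold e3; apply Rdiv_lt_0_compat; lra).
  destruct (rpow_small e3 alpha He3 Halpha) as [r0 [Hr0 Hr]].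
  destruct (ev_big T (Rabs s0 + 1) HT) as [N HN].
  exists (Rmin (Rmin 1 (Rmin da db)) (Rmin dP r0)), N.
  split.
  { repeat apply Rmin_glb_lt; lra. }
  intros n Hn s Hs.
  pose proof (Rmin_l (Rmin 1 (Rmin da db)) (Rmin dP r0)) as m1.
  pose proof (Rmin_r (Rmin 1 (Rmin da db)) (Rmin dP r0)) as m2.
  pose proof (Rmin_l 1 (Rmin da db)) as m3. pose proof (Rmin_r 1 (Rmin da db)) as m4.
  pose proof (Rmin_l da db) as m5. pose proof (Rmin_r da db) as m6.
  pose proof (Rmin_l dP r0) as m7. pose proof (Rmin_r dP r0) as m8.
  set (D := Rabs (s - s0)) in *.
  specialize (HN n Hn).
  assert (Hs0pos : 0 < s0 + INR n * T).
  { pose proof (Rle_abs (- s0)). rewrite Rabs_Ropp in H. lra. }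
  assert (Hspos : 0 < s + INR n * T).
  { pose proof (Rle_abs (- s0)). rewrite Rabs_Ropp in H.
    assert (Hs1 : D < 1) by lra. unfold D in Hs1. apply abs_lt_inv in Hs1. lra. }
  assert (Hbnd : forall t y, 0 < t + INR n * T -> Rabs (G n t y) <= K).
  { intros t y Ht. destruct (G_bounds n t y ltac:(lra)). rewrite Rabs_right; lra. }
  assert (Hlip : forall y, Rabs (G n s y - G n s0 y) <= Cd * D).
  { intros y. apply G_lip; auto. }
  unfold sc_rhs, ext. fold ja jb j0.
  set (a1 := G n s (x + 1)). set (a0 := G n s x). set (am := G n s (x - 1)).
  set (b1 := G n s0 (x + 1)). set (b0 := G n s0 x). set (bm := G n s0 (x - 1)).
  assert (Ha1 := Hbnd s (x + 1) Hspos). assert (Ha0 := Hbnd s x Hspos).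
  assert (Ham := Hbnd s (x - 1) Hspos).
  assert (Hb1 := Hbnd s0 (x + 1) Hs0pos). assert (Hb0 := Hbnd s0 x Hs0pos).
  assert (Hbm := Hbnd s0 (x - 1) Hs0pos).
  assert (L1 := Hlip (x + 1)). assert (L0 := Hlip x). assert (Lm := Hlip (x - 1)).
  fold a1 a0 am b1 b0 bm in Ha1, Ha0, Ham, Hb1, Hb0, Hbm, L1, L0, Lm.
  assert (HDa : Rabs (d s ja - d s0 ja) < e1) by (apply Hxa; change (D < da); lra).
  assert (HDb : Rabs (d s jb - d s0 jb) < e1) by (apply Hxb; change (D < db); lra).
  assert (Hd0a : Rabs (d s0 ja) <= Bd) by (rewrite Rabs_right; [apply HdB|apply Rle_ge, Hdpos]).
  assert (Hd0b : Rabs (d s0 jb) <= Bd) by (rewrite Rabs_right; [apply HdB|apply Rle_ge, Hdpos]).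
  assert (Y1 : Rabs (a1 - a0) <= 2 * K).
  { unfold Rminus. eapply Rle_trans; [apply Rabs_triang|]. rewrite Rabs_Ropp. lra. }
  assert (Ym : Rabs (am - a0) <= 2 * K).
  { unfold Rminus. eapply Rle_trans; [apply Rabs_triang|]. rewrite Rabs_Ropp. lra. }
  assert (Z1 : Rabs ((a1 - a0) - (b1 - b0)) <= 2 * (Cd * D)).
  { replace ((a1 - a0) - (b1 - b0)) with ((a1 - b1) + - (a0 - b0)) by ring.
    eapply Rle_trans; [apply Rabs_triang|]. rewrite Rabs_Ropp. lra. }
  assert (Zm : Rabs ((am - a0) - (bm - b0)) <= 2 * (Cd * D)).
  { replace ((am - a0) - (bm - b0)) with ((am - bm) + - (a0 - b0)) by ring.
    eapply Rle_trans; [apply Rabs_triang|]. rewrite Rabs_Ropp. lra. }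
  assert (T1 := prod_diff (d s ja) (a1 - a0) (d s0 ja) (b1 - b0) Bd (2 * K) Y1 Hd0a).
  assert (T2 := prod_diff (d s jb) (am - a0) (d s0 jb) (bm - b0) Bd (2 * K) Ym Hd0b).
  assert (Yf : Rabs (f s j0 a0) <= F0 + L * K) by (apply (f_bound f F0 L HF0 HL); auto).
  assert (T3 := prod_diff a0 (f s j0 a0) b0 (f s0 j0 b0) K (F0 + L * K) Yf Hb0).
  assert (Hrp : Rpower D alpha < e3) by (apply Hr; lra).
  assert (Hfd : Rabs (f s j0 a0 - f s0 j0 b0) <= CH * e3 + L * (Cd * D)).
  { eapply Rle_trans; [apply (abs_sub3 _ (f s0 j0 a0))|].
    apply Rplus_le_compat.
    - eapply Rle_trans; [apply HC; [auto|change (D <= 1); lra]|]. fold D.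
      pose proof (rpow_pos D alpha).
      apply Rle_trans with (CH * Rpower D alpha).
      + apply Rmult_le_compat_r; [lra|apply Rle_abs].
      + apply Rmult_le_compat_l; lra.
    - eapply Rle_trans; [apply HL|]. apply Rmult_le_compat_l; auto. }
  replace (d s ja * (a1 - a0) + d s jb * (am - a0) + a0 * f s j0 a0 -
    (d s0 ja * (b1 - b0) + d s0 jb * (bm - b0) + b0 * f s0 j0 b0)) with
    ((d s ja * (a1 - a0) - d s0 ja * (b1 - b0)) + (d s jb * (am - a0) - d s0 jb * (bm - b0))
     + (a0 * f s j0 a0 - b0 * f s0 j0 b0)) by ring.
  eapply Rle_trans; [apply Rabs_triang|].
  eapply Rle_trans; [apply Rplus_le_compat_r; apply Rabs_triang|].
  assert (B1 : Rabs (d s ja - d s0 ja) * (2 * K) <= e1 * (2 * K)) by (apply Rmult_le_compat_r; lra).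
  assert (B2 : Rabs (d s jb - d s0 jb) * (2 * K) <= e1 * (2 * K)) by (apply Rmult_le_compat_r; lra).
  assert (B3 : Bd * Rabs (a1 - a0 - (b1 - b0)) <= Bd * (2 * (Cd * D))) by (apply Rmult_le_compat_l; lra).
  assert (B4 : Bd * Rabs (am - a0 - (bm - b0)) <= Bd * (2 * (Cd * D))) by (apply Rmult_le_compat_l; lra).
  assert (B5 : Rabs (a0 - b0) * (F0 + L * K) <= Cd * D * (F0 + L * K)).
  { apply Rmult_le_compat_r; [assert (0 <= L * K) by (apply Rmult_le_pos; lra); lra|lra]. }
  assert (B6 : K * Rabs (f s j0 a0 - f s0 j0 b0) <= K * (CH * e3 + L * (Cd * D)))
    by (apply Rmult_le_compat_l; lra).
  assert (E1 : e1 * (2 * K) + e1 * (2 * K) <= eps / 2).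
  { unfold e1. apply (Rmult_le_reg_r (8 * (K + 1))); [lra|].
    replace ((eps / (8 * (K + 1)) * (2 * K) + eps / (8 * (K + 1)) * (2 * K)) * (8 * (K + 1)))
      with (4 * K * eps) by (field; lra). nra. }
  assert (E2 : P * D <= eps / 4).
  { assert (P * D <= P * dP) by (apply Rmult_le_compat_l; lra).
    assert (P * dP <= eps / 4).
    { unfold dP. apply (Rmult_le_reg_r (4 * (P + 1))); [lra|].
      replace (P * (eps / (4 * (P + 1))) * (4 * (P + 1))) with (P * eps) by (field; lra). nra. }
    lra. }
  assert (E3 : K * (CH * e3) <= eps / 4).
  { unfold e3. apply (Rmult_le_reg_r (4 * (K * CH + 1))); [lra|].
    replace (K * (CH * (eps / (4 * (K * CH + 1)))) * (4 * (K * CH + 1))) with (K * CH * eps)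
      by (field; lra). nra. }
  assert (EP : P * D = Bd * (2 * (Cd * D)) + Bd * (2 * (Cd * D)) + Cd * D * (F0 + L * K) + K * (L * (Cd * D)))
    by (unfold P; ring).
  assert (EK : K * (CH * e3 + L * (Cd * D)) = K * (CH * e3) + K * (L * (Cd * D))) by ring.
  lra.
Qed.

Lemma mvt_quot n s0 x hh : hh <> 0 -> 0 < s0 - Rabs hh + INR n * T ->
  exists xi, 0 < Rabs (xi - s0) < Rabs hh /\
    (G n (s0 + hh) x - G n s0 x) / hh = sc_rhs d f z xi (fun y => G n xi y) x.
Proof.
  intros Hh Hpos.
  destruct (Rtotal_order hh 0) as [Hl|[He|Hg]]; [|lra|].
  - rewrite Rabs_left in * by lra.
    destruct (MVT_cor2 (fun s => G n s x) (fun s => sc_rhs d f z s (fun y => G n s y) x)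
      (s0 + hh) s0 ltac:(lra)) as [xi [Hxi Hxi2]].
    { intros s Hs. apply G_deriv. lra. }
    exists xi. split.
    + rewrite Rabs_left by lra. lra.
    + simpl in Hxi. apply (Rmult_eq_reg_r hh); [|lra].
      unfold Rdiv. rewrite Rmult_assoc, Rinv_l, Rmult_1_r by lra. lra.
  - rewrite Rabs_right in * by lra.
    destruct (MVT_cor2 (fun s => G n s x) (fun s => sc_rhs d f z s (fun y => G n s y) x)
      s0 (s0 + hh) ltac:(lra)) as [xi [Hxi Hxi2]].
    { intros s Hs. apply G_deriv. lra. }
    exists xi. split.
    + rewrite Rabs_right by lra. lra.
    + simpl in Hxi. apply (Rmult_eq_reg_r hh); [|lra].
      unfold Rdiv. rewrite Rmult_assoc, Rinv_l, Rmult_1_r by lra. rewrite Hxi. ring.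
Qed.

Lemma V_deriv s0 x : derivable_pt_lim (fun s => V s x) s0 (sc_rhs d f z s0 (fun y => V s0 y) x).
Proof.
  intros eps Heps.
  destruct (equicont s0 x (eps / 2) ltac:(lra)) as [del [N [Hdel Heq]]].
  exists (mkposreal del Hdel). intros hh Hh0 Hhh. simpl in Hhh.
  destruct (ev_big T (Rabs s0 + Rabs hh + 1) HT) as [N2 HN2].
  assert (Hcv : Un_cv (fun n => (G n (s0 + hh) x - G n s0 x) / hh - sc_rhs d f z s0 (fun y => G n s0 y) x)
     ((V (s0 + hh) x - V s0 x) / hh - sc_rhs d f z s0 (fun y => V s0 y) x)).
  { apply CV_minus; [|apply hconv]. unfold Rdiv.
    apply CV_mult; [apply CV_minus; apply HV|apply CV_const]. }
  assert (Hle := CV_le _ _ (eps / 2) (Nat.max N N2) Hcv).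
  enough (Rabs ((V (s0 + hh) x - V s0 x) / hh - sc_rhs d f z s0 (fun y => V s0 y) x) <= eps / 2) by lra.
  apply Hle. intros n Hn.
  specialize (HN2 n ltac:(lia)).
  assert (Hpos : 0 < s0 - Rabs hh + INR n * T).
  { pose proof (Rle_abs (- s0)). rewrite Rabs_Ropp in H. lra. }
  destruct (mvt_quot n s0 x hh Hh0 Hpos) as [xi [Hxi Hq]].
  rewrite Hq. apply (Heq n ltac:(lia)). lra.
Qed.

Lemma V_fixed t x : 0 <= t -> V t x = U t x (fun y => V 0 y) z.
Proof.
  intros Ht.
  destruct (HU (fun y => V 0 y) z) as [H0 [Hder [Hrc Hbd]]].
  { exists K. intros y. destruct (V_bounds 0 y). rewrite Rabs_right; lra. }
  apply (uniqueness d f Bd F0 L Hdpos HdB HF0 HL z V (fun t x => U t x (fun y => V 0 y) z)); auto.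
  - split; [intros; apply V_deriv|split].
    + intros y. eapply deriv_rcont. apply V_deriv.
    + intros tau. exists K. intros t' y _. destruct (V_bounds t' y). rewrite Rabs_right; lra.
  - split; [exact Hder|split; [|exact Hbd]].
    intros y eps Heps. destruct (Hrc y eps Heps) as [del [Hdel Hx]].
    exists del; split; auto. intros s Hs. apply Hx. lra.
Qed.

End Core.

Theorem lemma3p2
  (T : R) (J : Z) (d : R -> Z -> R) (f fu : R -> Z -> R -> R) (M0 : R)
  (uplus : R -> Z -> R) (lam : R -> R) (psi : R -> R -> Z -> R)
  (cstar mustar c mu mu' dd d1 b N M : R)
  (U : R -> R -> (R -> R) -> R -> R) (uP uM : R -> R -> R -> R)
  (HT : 0 < T) (HJ : (0 < J)%Z)
  (Hd : hyp_d T J d) (Hf : hyp_H0 T J M0 f fu)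
  (Hup : is_uplus d f uplus)
  (Heig : is_eigen T J d f lam psi)
  (Hmustar : 0 < mustar) (Hcstar : cstar = lam mustar / mustar)
  (Hcmin : forall m, 0 < m -> cstar <= lam m / m)
  (Hc : cstar < c)
  (Hmu : 0 < mu /\ mu < mu' /\ mu' < Rmin (2 * mu) mustar)
  (Hcmu : c = lam mu / mu) (Hmu' : lam mu / mu > lam mu' / mu' /\ lam mu' / mu' > cstar)
  (Hdd : 0 < dd <= 2) (Hd1 : 0 < d1) (Hb : 0 < b) (HNM : N <= M)
  (HM : forall t x z, N <= x - c * t <= M ->
          b * ext (psi 0) t (x + z) <= vlow psi c mu mu' dd d1 t x z)
  (HU : is_sol_map d f U)
  (HuP : forall t x z, Un_cv (fun n => u_sup U psi uplus T c mu mu' dd d1 n t x z) (uP t x z))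
  (HuM : forall t x z, Un_cv (fun n => u_sub U psi T c mu mu' dd d1 b M n t x z) (uM t x z)) :
  forall z,
    (forall t x, 0 <= t -> uP t x z = U t x (fun y => uP 0 y z) z) /\
    (forall t x, 0 <= t -> uM t x z = U t x (fun y => uM 0 y z) z) /\
    (forall t x, derivable_pt_lim (fun s => uP s x z) t (sc_rhs d f z t (fun y => uP t y z) x)) /\
    (forall t x, derivable_pt_lim (fun s => uM s x z) t (sc_rhs d f z t (fun y => uM t y z) x)).
Proof.
  intros z.
  destruct (F0_exists T J M0 f fu HT HJ Hf) as [F0 HF0].
  destruct Hd as [[Bd HdB] [[delta [Hdelta Hdlow]] [Hdcont [HdT _]]]].
  assert (Hdpos : forall t j, 0 <= d t j) by (intros t j; specialize (Hdlow t j); lra).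
  destruct Hf as [[alpha [[Halpha _] Hhol]] [[L HL] [_ [_ [Hneg [[HM0p HM0] [_ [_ [HfT _]]]]]]]]].
  destruct (uupper_bounds T J d f uplus lam psi c mu mu' dd d1 Hup Heig ltac:(lra) Hd1) as [Ku HKu].
  destruct (ulow_bounds T J d f lam psi c mu mu' dd d1 b N M HJ Heig ltac:(lra) ltac:(lra) Hd1 Hb HNM HM)
    as [Kl HKl].
  set (K := Rmax M0 (Rmax Ku Kl)).
  assert (HK : M0 <= K) by apply Rmax_l.
  assert (HKu' : Ku <= K) by (eapply Rle_trans; [apply Rmax_l|apply Rmax_r]).
  assert (HKl' : Kl <= K) by (eapply Rle_trans; [apply Rmax_r|apply Rmax_r]).
  set (datP := fun n y => uupper psi uplus c mu mu' dd d1 0 y (z - c * INR n * T)).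
  set (datM := fun n y => ulow psi c mu mu' dd d1 b M 0 y (z - c * INR n * T)).
  assert (HdatP : forall n y, 0 <= datP n y <= K).
  { intros n y. unfold datP. destruct (HKu y (z - c * INR n * T)). lra. }
  assert (HdatM : forall n y, 0 <= datM n y <= K).
  { intros n y. unfold datM. destruct (HKl y (z - c * INR n * T)). lra. }
  assert (HVP : forall t x, Un_cv (fun n => G T U z c datP n t x) (uP t x z)) by (intros; apply HuP).
  assert (HVM : forall t x, Un_cv (fun n => G T U z c datM n t x) (uM t x z)) by (intros; apply HuM).
  split; [|split; [|split]].
  - intros t x Ht.
    exact (V_fixed T d f Bd F0 L M0 alpha U z c K datP (fun t x => uP t x z) HT Hdpos HdB Hdcont HdT
             HF0 HL Hneg HM0 HM0p HfT Halpha Hhol HU HK HdatP HVP t x Ht).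
  - intros t x Ht.
    exact (V_fixed T d f Bd F0 L M0 alpha U z c K datM (fun t x => uM t x z) HT Hdpos HdB Hdcont HdT
             HF0 HL Hneg HM0 HM0p HfT Halpha Hhol HU HK HdatM HVM t x Ht).
  - intros t x.
    exact (V_deriv T d f Bd F0 L M0 alpha U z c K datP (fun t x => uP t x z) HT Hdpos HdB Hdcont HdT
             HF0 HL Hneg HM0 HM0p HfT Halpha Hhol HU HK HdatP HVP t x).
  - intros t x.
    exact (V_deriv T d f Bd F0 L M0 alpha U z c K datM (fun t x => uM t x z) HT Hdpos HdB Hdcont HdT
             HF0 HL Hneg HM0 HM0p HfT Halpha Hhol HU HK HdatM HVM t x).
Qed.
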